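(* Let $x_k\in\mathbb{R}^n_{\ge0}$ satisfy $Ax_k\le(1+\epsilon)\mathbf 1$, let $t\in\{0,\dots,w-1\}$, and let $B_t=\{i:\xi^{(t)}_k[i]\ne 0\}$. Then for every $\tau\in[0,1]$ and $x=\tau x_k+(1-\tau)x^{(t)}_{k+1}$, and every $i\in B_t$, the value $\nabla_i f_\mu(x)$ lies between $\frac12\nabla_i f_\mu(x_k)$ and $\frac32\nabla_i f_\mu(x_k)$ (in particular it has the same sign as $\nabla_i f_\mu(x_k)$).
   Context: Standing setup: $A\in\mathbb{R}^{m\times n}_{\ge 0}$, $\epsilon\in(0,1/2]$, $\log$ is the natural logarithm unless written $\log_2$. $\mu=\frac{\epsilon}{4\log(nm/\epsilon)}$, $p_j(x)=\exp\big(\frac{1}{\mu}((Ax)_j-1)\big)$, $f_\mu(x)=-\mathbf 1^Tx+\mu\sum_{j=1}^m p_j(x)$, with gradient $\nabla_i f_\mu(x)=-1+\sum_j A_{ji}p_j(x)\ge -1$. Set $\alpha=\mu/20$ and $w=\lceil\log_2(1/\epsilon)\rceil$. Given $x_k\ge 0$, write $g_i=\nabla_i f_\mu(x_k)$ and define $\xi_k[i]=0$ if $|g_i|\le\epsilon$, $\xi_k[i]=g_i$ if $\epsilon<|g_i|\le1$, $\xi_k[i]=1$ if $g_i>1$; for $t\in\{0,\dots,w-1\}$, $\xi^{(t)}_k[i]=\xi_k[i]$ if $\epsilon2^t<|\xi_k[i]|\le\epsilon2^{t+1}$ and $0$ otherwise; and $x^{(t)}_{k+1}[i]=x_k[i]\exp(-\alpha\xi^{(t)}_k[i])$.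 *)

(* Defs.v *)
From Stdlib Require Import Reals Lra Lia ZArith.
Open Scope R_scope.

Fixpoint fsum (n : nat) (f : nat -> R) : R :=
  match n with O => 0 | S k => fsum k f + f k end.

(* A is an m x n matrix given by entries A j i (row j < m, column i < n);
   vectors x : nat -> R, only indices < n matter. *)

Definition Ax (n : nat) (A : nat -> nat -> R) (x : nat -> R) (j : nat) : R :=
  fsum n (fun i => A j i * x i).

Definition mu (n m : nat) (eps : R) : R :=
  eps / (4 * ln (INR n * INR m / eps)).

Definition pj (n m : nat) (eps : R) (A : nat -> nat -> R) (x : nat -> R) (j : nat) : R :=
  exp (/ mu n m eps * (Ax n A x j - 1)).

Definition grad (n m : nat) (eps : R) (A : nat -> nat -> R) (x : nat -> R) (i : nat) : R :=
  -1 + fsum m (fun j => A j i * pj n m eps A x j).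

Definition alpha (n m : nat) (eps : R) : R := mu n m eps / 20.

(* w = ceil(log2 (1/eps)), ceil y = - floor (- y), floor = Int_part *)
Definition wnum (eps : R) : nat :=
  Z.to_nat (- Int_part (- (ln (/ eps) / ln 2))).

Definition xi (n m : nat) (eps : R) (A : nat -> nat -> R) (xk : nat -> R) (i : nat) : R :=
  let g := grad n m eps A xk i in
  if Rle_dec (Rabs g) eps then 0
  else if Rle_dec (Rabs g) 1 then g
  else 1.   (* |g| > 1 forces g > 1 since g >= -1 *)

Definition xit (n m : nat) (eps : R) (A : nat -> nat -> R) (xk : nat -> R) (t i : nat) : R :=
  let v := xi n m eps A xk i in
  if Rlt_dec (eps * 2 ^ t) (Rabs v) then
    (if Rle_dec (Rabs v) (eps * 2 ^ (S t)) then v else 0)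
  else 0.

Definition xnext (n m : nat) (eps : R) (A : nat -> nat -> R) (xk : nat -> R) (t i : nat) : R :=
  xk i * exp (- alpha n m eps * xit n m eps A xk t i).

(* Main.v *)
Require Import Defs.
From Stdlib Require Import Reals Lra Lia.
Open Scope R_scope.

Lemma fsum_le n f g : (forall k, (k < n)%nat -> f k <= g k) -> fsum n f <= fsum n g.
Proof. induction n; simpl; intros H; [lra|].
assert (fsum n f <= fsum n g) by (apply IHn; intros; apply H; lia).
assert (f n <= g n) by (apply H; lia). lra. Qed.

Lemma fsum_minus n f g : fsum n f - fsum n g = fsum n (fun k => f k - g k).
Proof. induction n; simpl; [lra|]. rewrite <- IHn. lra. Qed.

Lemma fsum_scal n c f : fsum n (fun k => c * f k) = c * fsum n f.
Proof. induction n; simpl; [lra|]. rewrite IHn. lra. Qed.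

Lemma fsum_abs n f : Rabs (fsum n f) <= fsum n (fun k => Rabs (f k)).
Proof. induction n; simpl. rewrite Rabs_R0; lra.
eapply Rle_trans; [apply Rabs_triang|]. lra. Qed.

Lemma fsum_zero n : fsum n (fun _ => 0) = 0.
Proof. induction n; simpl; [lra|]. rewrite IHn; lra. Qed.

Lemma fsum_nonneg n f : (forall k, (k<n)%nat -> 0 <= f k) -> 0 <= fsum n f.
Proof. intros H. rewrite <- (fsum_zero n). apply fsum_le; auto. Qed.

Lemma exp_le x y : x <= y -> exp x <= exp y.
Proof. intros [H|H]. left; apply exp_increasing; auto. subst; lra. Qed.

Lemma ln_le' x y : 0 < x -> x <= y -> ln x <= ln y.
Proof. intros H [H1|H1]. left; apply ln_increasing; auto. subst; lra. Qed.

Lemma exp_abs_sub1 z : Rabs (exp z - 1) <= exp (Rabs z) - 1.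
Proof.
pose proof (exp_ineq1_le z). pose proof (exp_ineq1_le (-z)).
destruct (Rle_dec 0 z).
- rewrite (Rabs_pos_eq z) by auto. rewrite Rabs_pos_eq; lra.
- rewrite (Rabs_left z) by lra. apply Rabs_le.
  assert (exp z <= exp (-z)) by (apply exp_le; lra). lra.
Qed.

Lemma exp_le_inv y : 0 <= y < 1 -> exp y <= 1/(1-y).
Proof. intros Hy. pose proof (exp_ineq1_le (-y)). rewrite exp_Ropp in H.
pose proof (exp_pos y).
assert (H1 : (1-y) * exp y <= 1).
{ replace 1 with (/ exp y * exp y) at 2 by (field; lra).
  apply Rmult_le_compat_r; lra. }
apply (Rmult_le_reg_l (1-y)); [lra|].
replace ((1-y)*(1/(1-y))) with 1 by (field; lra). lra. Qed.

Lemma exp_sub1_bound y : 0 <= y < 1 -> exp y - 1 <= y/(1-y).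
Proof. intros Hy. pose proof (exp_le_inv y Hy).
replace (y/(1-y)) with (1/(1-y) - 1) by (field; lra). lra. Qed.

Lemma final_real S g G E c v :
  0 <= S -> g = -1 + S -> 0 <= E -> E <= c/11 -> c/2 < v -> v <= 1 -> v <= Rabs g ->
  Rabs (G - g) <= S * E ->
  (1 / 2 * g <= G <= 3 / 2 * g) \/ (3 / 2 * g <= G <= 1 / 2 * g).
Proof.
intros HS Hg HE HEc Hcv Hv1 Hvg HG.
assert (Hk : S * E <= Rabs g / 2).
{ destruct (Rle_dec g 1).
  - assert (S <= 2) by lra. assert (c < 2 * Rabs g) by lra.
    assert (S * E <= 2 * (c/11)) by (apply Rmult_le_compat; lra). lra.
  - rewrite Rabs_pos_eq in * by lra. assert (c < 2) by lra.
    assert (S * E <= S * (2/11)) by (apply Rmult_le_compat_l; lra). lra. }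
assert (HG1 := Rle_abs (G-g)). assert (HG2 := Rle_abs (-(G-g))). rewrite Rabs_Ropp in HG2. destruct (Rle_dec 0 g).
- rewrite Rabs_pos_eq in Hk by lra. left; lra.
- rewrite Rabs_left in Hk by lra. right; lra.
Qed.

Lemma xit_abs n m eps A xk t l : 0 < eps ->
  Rabs (xit n m eps A xk t l) <= eps * 2 ^ (S t).
Proof. intros He. assert (0 < eps * 2 ^ S t) by (apply Rmult_lt_0_compat; [lra| apply pow_lt; lra]).
unfold xit. destruct (Rlt_dec _ _); [destruct (Rle_dec _ _)|]; try (rewrite Rabs_R0; lra); auto. Qed.

Lemma xi_props n m eps A xk i :
  Rabs (xi n m eps A xk i) <= 1 /\ Rabs (xi n m eps A xk i) <= Rabs (grad n m eps A xk i).
Proof. unfold xi. cbv zeta. destruct (Rle_dec _ eps).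
- rewrite Rabs_R0. split; [lra| apply Rabs_pos].
- destruct (Rle_dec _ 1). split; lra. rewrite Rabs_R1. split; lra. Qed.

Theorem lemma3p3 (n m : nat) (A : nat -> nat -> R) (eps : R) (xk : nat -> R)
  (t : nat) (tau : R) (i : nat) :
  (0 < n)%nat -> (0 < m)%nat ->
  (forall j l, (j < m)%nat -> (l < n)%nat -> 0 <= A j l) ->
  0 < eps -> eps <= 1 / 2 ->
  (forall l, (l < n)%nat -> 0 <= xk l) ->
  (forall j, (j < m)%nat -> Ax n A xk j <= 1 + eps) ->
  (t < wnum eps)%nat ->
  0 <= tau <= 1 ->
  (i < n)%nat ->
  xit n m eps A xk t i <> 0 ->
  let x := fun l => tau * xk l + (1 - tau) * xnext n m eps A xk t l in
  let g := grad n m eps A xk i in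
  (1 / 2 * g <= grad n m eps A x i <= 3 / 2 * g) \/
  (3 / 2 * g <= grad n m eps A x i <= 1 / 2 * g).
Proof.
intros Hn Hm HA He He2 Hxk HAx _ Htau Hi Hxit x g.
assert (Hln2 : 1/2 <= ln 2).
{ assert (H := exp_le_inv (1/2) ltac:(lra)).
  replace (1/(1-1/2)) with 2 in H by field.
  rewrite <- (ln_exp (1/2)). apply ln_le'; [apply exp_pos|auto]. }
assert (HnR : 1 <= INR n) by (apply (le_INR 1); lia).
assert (HmR : 1 <= INR m) by (apply (le_INR 1); lia).
assert (Hie : 2 <= / eps).
{ replace 2 with (/ (1/2)) by field. apply Rinv_le_contravar; lra. }
assert (HL : 1/2 <= ln (INR n * INR m / eps)).
{ eapply Rle_trans; [exact Hln2|]. apply ln_le'; [lra|]. unfold Rdiv.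
  assert (1 <= INR n * INR m) by nra. nra. }
assert (Hmu0 : 0 < mu n m eps) by (unfold mu; apply Rdiv_lt_0_compat; lra).
assert (Hmu1 : mu n m eps * (4 * ln (INR n * INR m / eps)) = eps) by (unfold mu; field; lra).
assert (Hmu2 : mu n m eps <= eps / 2) by nra.
set (c := eps * 2 ^ S t).
assert (Hc0 : 0 < c) by (unfold c; apply Rmult_lt_0_compat; [lra| apply pow_lt; lra]).
destruct (xi_props n m eps A xk i) as [Hv1 Hvg].
assert (Hcv : c / 2 < Rabs (xi n m eps A xk i)).
{ revert Hxit. unfold xit. cbv zeta.
  destruct (Rlt_dec _ _) as [H1|H1]; [|tauto].
  destruct (Rle_dec _ _) as [H2|H2]; [|tauto]. intros _.
  unfold c. simpl. lra. }
assert (Hc2 : c < 2) by lra.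
set (y := alpha n m eps * c).
assert (Hy : 0 <= y <= 1/40).
{ unfold y, alpha. split. apply Rmult_le_pos; lra.
  assert (mu n m eps * c <= 1/4 * 2) by (apply Rmult_le_compat; lra). lra. }
set (K := exp y - 1).
assert (HK0 : 0 <= K) by (unfold K; pose proof (exp_ineq1_le y); lra).
assert (HK1 : K <= 40/39 * y).
{ unfold K. eapply Rle_trans; [apply exp_sub1_bound; lra|].
  replace (40/39*y) with (y * /(39/40)) by field. unfold Rdiv.
  apply Rmult_le_compat_l; [lra|]. apply Rinv_le_contravar; lra. }
set (D := c / 13).
assert (HKD : K * (1 + eps) <= mu n m eps * D).
{ assert (K * (1+eps) <= 40/39 * y * (3/2)) by (apply Rmult_le_compat; lra).
  unfold y, alpha, D in *. lra. }
assert (Hxl : forall l, (l < n)%nat -> Rabs (x l - xk l) <= xk l * K).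
{ intros l Hl. unfold x, xnext.
  replace (tau * xk l + (1 - tau) * (xk l * exp (- alpha n m eps * xit n m eps A xk t l)) - xk l)
    with ((1 - tau) * xk l * (exp (- alpha n m eps * xit n m eps A xk t l) - 1)) by ring.
  rewrite !Rabs_mult. rewrite (Rabs_pos_eq (1-tau)) by lra. rewrite (Rabs_pos_eq (xk l)) by auto.
  assert (Hal : 0 <= alpha n m eps) by (unfold alpha; lra).
  assert (Hb : Rabs (exp (- alpha n m eps * xit n m eps A xk t l) - 1) <= K).
  { eapply Rle_trans; [apply exp_abs_sub1|]. unfold K. apply Rplus_le_compat_r. apply exp_le.
    rewrite Rabs_mult, Rabs_Ropp, (Rabs_pos_eq (alpha _ _ _)) by auto. unfold y.
    apply Rmult_le_compat_l; auto. apply xit_abs; auto. }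
  pose proof (Hxk l Hl). pose proof (Rabs_pos (exp (- alpha n m eps * xit n m eps A xk t l) - 1)).
  assert ((1-tau) * xk l <= xk l) by nra.
  assert ((1-tau) * xk l * Rabs (exp (- alpha n m eps * xit n m eps A xk t l) - 1) <= xk l * K).
  { apply Rmult_le_compat; nra. }
  lra. }
assert (HAxd : forall j, (j < m)%nat -> Rabs (Ax n A x j - Ax n A xk j) <= mu n m eps * D).
{ intros j Hj. assert (H0 : 0 <= Ax n A xk j).
  { unfold Ax. apply fsum_nonneg. intros l Hl. apply Rmult_le_pos; auto. }
  eapply Rle_trans with (K * Ax n A xk j).
  - unfold Ax. rewrite fsum_minus. eapply Rle_trans; [apply fsum_abs|].
    rewrite <- fsum_scal. apply fsum_le. intros l Hl.
    replace (A j l * x l - A j l * xk l) with (A j l * (x l - xk l)) by ring.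
    rewrite Rabs_mult, (Rabs_pos_eq (A j l)) by auto.
    apply Rle_trans with (A j l * (xk l * K)).
    + apply Rmult_le_compat_l; auto.
    + right; ring.
  - eapply Rle_trans; [|exact HKD]. apply Rmult_le_compat_l; auto. }
set (E := exp D - 1).
assert (HE0 : 0 <= E) by (unfold E; pose proof (exp_ineq1_le D); unfold D in *; lra).
assert (HE1 : E <= c / 11).
{ unfold E. eapply Rle_trans; [apply exp_sub1_bound; unfold D; lra|].
  unfold D. apply (Rmult_le_reg_l (1 - c/13)); [lra|].
  replace ((1 - c/13) * (c/13 / (1 - c/13))) with (c/13) by (field; lra). nra. }
assert (Hpj : forall j, (j < m)%nat ->
   Rabs (pj n m eps A x j - pj n m eps A xk j) <= pj n m eps A xk j * E).
{ intros j Hj. unfold pj.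
  set (dd := / mu n m eps * (Ax n A x j - Ax n A xk j)).
  replace (/ mu n m eps * (Ax n A x j - 1)) with (/ mu n m eps * (Ax n A xk j - 1) + dd)
    by (unfold dd; ring).
  rewrite exp_plus.
  replace (exp (/ mu n m eps * (Ax n A xk j - 1)) * exp dd - exp (/ mu n m eps * (Ax n A xk j - 1)))
    with (exp (/ mu n m eps * (Ax n A xk j - 1)) * (exp dd - 1)) by ring.
  rewrite Rabs_mult, (Rabs_pos_eq (exp _)) by (left; apply exp_pos).
  apply Rmult_le_compat_l; [left; apply exp_pos|].
  eapply Rle_trans; [apply exp_abs_sub1|]. unfold E. apply Rplus_le_compat_r. apply exp_le.
  unfold dd. rewrite Rabs_mult, (Rabs_pos_eq (/ _)) by (left; apply Rinv_0_lt_compat; auto).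
  apply (Rmult_le_reg_l (mu n m eps)); auto. rewrite <- Rmult_assoc, Rinv_r by lra.
  rewrite Rmult_1_l. apply HAxd; auto. }
set (S0 := fsum m (fun j => A j i * pj n m eps A xk j)).
assert (HS : 0 <= S0).
{ apply fsum_nonneg. intros j Hj. apply Rmult_le_pos; auto. unfold pj; left; apply exp_pos. }
apply (final_real S0 g (grad n m eps A x i) E c (Rabs (xi n m eps A xk i))); auto.
unfold g, grad. fold S0.
replace (-1 + fsum m (fun j => A j i * pj n m eps A x j) - (-1 + S0))
  with (fsum m (fun j => A j i * pj n m eps A x j) - S0) by ring.
unfold S0. rewrite fsum_minus. eapply Rle_trans; [apply fsum_abs|].
rewrite Rmult_comm, <- fsum_scal. apply fsum_le. intros j Hj.
replace (A j i * pj n m eps A x j - A j i * pj n m eps A xk j)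
  with (A j i * (pj n m eps A x j - pj n m eps A xk j)) by ring.
rewrite Rabs_mult, (Rabs_pos_eq (A j i)) by auto.
apply Rle_trans with (A j i * (pj n m eps A xk j * E)).
- apply Rmult_le_compat_l; auto.
- right; ring.
Qed.
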